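(* For every labelled sequent $\mathfrak{S}$: if $\mathrm{labCS}^\infty \vdash \mathfrak{S}$, then $\mathcal{M}\Vdash\mathfrak{S}$ for every Carlson model $\mathcal{M}$.
   Context: Formulas: fix a countable set $\mathtt{Prop}$ of propositional atoms; formulas are generated by $A ::= \bot \mid p \mid A \to A \mid \Box A \mid \triangle A$ with $p \in \mathtt{Prop}$. Carlson models: a Carlson model is a tuple $\mathcal{M} = \langle W, \prec, M_0, M_1, V\rangle$ where $W$ is a non-empty set, $\prec \subseteq W\times W$ is transitive and conversely wellfounded (there is no infinite chain $w_0 \prec w_1 \prec \cdots$), $M_0, M_1 \subseteq W$, and $V : \mathtt{Prop} \to \mathcal{P}(W)$. Truth: $\mathcal{M},x \nVdash \bot$; $\mathcal{M},x\Vdash p$ iff $x \in V(p)$; $\mathcal{M},x \Vdash A\to B$ iff $\mathcal{M},x\nVdash A$ or $\mathcal{M},x\Vdash B$; $\mathcal{M},x\Vdash \Box A$ iff $\mathcal{M},y \Vdash A$ for all $y$ with $x \prec y$ and $y \in M_0$; $\mathcal{M},x\Vdash \triangle A$ iff $\mathcal{M},y \Vdash A$ for all $y$ with $x \prec y$ and $y \in M_1$. Labelled sequents: fix a countable set $\mathtt{Lab}$ of labels. A labelled formula is $x:A$ with $x\in\mathtt{Lab}$ and $A$ a formula; a relational atom is $xRy$ or $xSy$ with $x,y \in \mathtt{Lab}$. A sequent $\mathcal{R},\Gamma\Rightarrow\Omega$ consists of a finite multiset $\mathcal{R}$ of relational atoms and finite multisets $\Gamma,\Omega$ of labelled formulas;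 commas denote multiset union. $Lab(\mathfrak{S})$ is the set of labels occurring in $\mathfrak{S}$. Rules of $\mathrm{labCS}^\infty$ (premisses above, conclusion below; $\mathcal{R},\Gamma,\Omega$ arbitrary): (Id) no premiss, conclusion $\mathcal{R},\Gamma,x:p\Rightarrow x:p,\Omega$ with $p\in\mathtt{Prop}$; ($\bot$) no premiss, conclusion $\mathcal{R},\Gamma,x:\bot\Rightarrow\Omega$; ($\to$R) from $\mathcal{R},\Gamma,x:A\Rightarrow x:B,\Omega$ infer $\mathcal{R},\Gamma\Rightarrow x:A\to B,\Omega$; ($\to$L) from $\mathcal{R},\Gamma\Rightarrow x:A,\Omega$ and $\mathcal{R},\Gamma,x:B\Rightarrow\Omega$ infer $\mathcal{R},\Gamma,x:A\to B\Rightarrow\Omega$; ($\Box$R) from $\mathcal{R},xRy,\Gamma\Rightarrow y:A,\Omega$ infer $\mathcal{R},\Gamma\Rightarrow x:\Box A,\Omega$, provided $y$ does not occur in the conclusion; ($\Box$L) from $\mathcal{R},xRy,x:\Box A,y:A,\Gamma\Rightarrow\Omega$ infer $\mathcal{R},xRy,x:\Box A,\Gamma\Rightarrow\Omega$; ($\triangle$R) from $\mathcal{R},xSy,\Gamma\Rightarrow y:A,\Omega$ infer $\mathcal{R},\Gamma\Rightarrow x:\triangle A,\Omega$, provided $y$ does not occur in the conclusion; ($\triangle$L) from $\mathcal{R},xSy,x:\triangle A,y:A,\Gamma\Rightarrow\Omega$ infer $\mathcal{R},xSy,x:\triangle A,\Gamma\Rightarrow\Omega$; ($\mathrm{trans}_{\circ\bullet}$,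 for each $\circ,\bullet\in\{R,S\}$) from $\mathcal{R},x\circ y,y\bullet z,x\bullet z,\Gamma\Rightarrow\Omega$ infer $\mathcal{R},x\circ y,y\bullet z,\Gamma\Rightarrow\Omega$. Proofs: a pre-proof is a possibly infinite tree of sequents in which each node is the conclusion of an instance of a rule whose premisses are exactly its children. A trace along an infinite branch $(\mathfrak{S}_i)_{i<\omega}$ with $\mathfrak{S}_i=\mathcal{R}_i,\Gamma_i\Rightarrow\Omega_i$ is a sequence of labels $(x_i)_{i<\omega}$ such that for each $i$: $x_{i+1}=x_i$, or $x_iRx_{i+1}\in\mathcal{R}_i$, or $x_iSx_{i+1}\in\mathcal{R}_i$. A trace is progressing if it is not eventually constant; a branch is progressing if it has a progressing trace. A proof is a pre-proof in which every branch is either finite or progressing. $\mathrm{labCS}^\infty\vdash\mathfrak{S}$ means there is a proof with root $\mathfrak{S}$. Semantics of sequents: given a sequent $\mathfrak{S}=\mathcal{R},\Gamma\Rightarrow\Omega$ and a Carlson model $\mathcal{M}$, an interpretation is a map $I: Lab(\mathfrak{S})\to W$ such that $xRy\in\mathcal{R}$ implies $I(x)\prec I(y)$ and $I(y)\in M_0$, and $xSy\in\mathcal{R}$ implies $I(x)\prec I(y)$ and $I(y)\in M_1$. $\mathcal{M}\Vdash\mathfrak{S}$ means: for every interpretation $I$ of $\mathfrak{S}$ on $\mathcal{M}$, if $\mathcal{M},I(x)\Vdash A$ for all $x:A\in\Gamma$, then $\mathcal{M},I(y)\Vdash B$ for some $y:B\in\Omega$. *)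

(* Defs.v *)
From Stdlib Require Import List Permutation Arith.
Import ListNotations.

Definition atom := nat.
Definition label := nat.

Inductive form : Type :=
| Bot : form
| Var : atom -> form
| Imp : form -> form -> form
| Box : form -> form
| Tri : form -> form.

Record carlson_model : Type := {
  W : Type;
  W_nonempty : inhabited W;
  prec : W -> W -> Prop;
  prec_trans : forall x y z, prec x y -> prec y z -> prec x z;
  prec_cwf : ~ (exists f : nat -> W, forall n, prec (f n) (f (S n)));
  M0 : W -> Prop;
  M1 : W -> Prop;
  V : atom -> W -> Prop
}.

Fixpoint forces (M : carlson_model) (x : W M) (A : form) : Prop :=
  match A with
  | Bot => False
  | Var p => V M p x
  | Imp A B => forces M x A -> forces M x B
  | Box A => forall y, prec M x y -> M0 M y -> forces M y A
  | Tri A => forall y, prec M x y -> M1 M y -> forces M y A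
  end.

Inductive ratom : Type :=
| RR : label -> label -> ratom
| RS : label -> label -> ratom.

Definition lform : Type := (label * form)%type.

(* Multisets are represented by lists; they are identified up to permutation
   (see [seq_perm] below). *)
Record sequent : Type := mkSeq {
  srel : list ratom;
  sant : list lform;
  ssuc : list lform
}.

Definition ratom_labels (r : ratom) : list label :=
  match r with RR x y => [x; y] | RS x y => [x; y] end.

Definition occurs (x : label) (s : sequent) : Prop :=
  (exists r, In r (srel s) /\ In x (ratom_labels r)) \/
  (exists A, In (x, A) (sant s)) \/
  (exists A, In (x, A) (ssuc s)).

(* Rule instances with the conclusion written in a fixed arrangement.
   [rule_inst c ps]: c is the conclusion, ps the list of premisses. *)
Inductive rule_inst : sequent -> list sequent -> Prop :=
| r_id : forall R G O x p,
    rule_inst (mkSeq R ((x, Var p) :: G) ((x, Var p) :: O)) []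
| r_bot : forall R G O x,
    rule_inst (mkSeq R ((x, Bot) :: G) O) []
| r_impR : forall R G O x A B,
    rule_inst (mkSeq R G ((x, Imp A B) :: O))
              [mkSeq R ((x, A) :: G) ((x, B) :: O)]
| r_impL : forall R G O x A B,
    rule_inst (mkSeq R ((x, Imp A B) :: G) O)
              [mkSeq R G ((x, A) :: O); mkSeq R ((x, B) :: G) O]
| r_boxR : forall R G O x y A,
    ~ occurs y (mkSeq R G ((x, Box A) :: O)) ->
    rule_inst (mkSeq R G ((x, Box A) :: O))
              [mkSeq (RR x y :: R) G ((y, A) :: O)]
| r_boxL : forall R G O x y A,
    rule_inst (mkSeq (RR x y :: R) ((x, Box A) :: G) O)
              [mkSeq (RR x y :: R) ((x, Box A) :: (y, A) :: G) O]
| r_triR : forall R G O x y A,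
    ~ occurs y (mkSeq R G ((x, Tri A) :: O)) ->
    rule_inst (mkSeq R G ((x, Tri A) :: O))
              [mkSeq (RS x y :: R) G ((y, A) :: O)]
| r_triL : forall R G O x y A,
    rule_inst (mkSeq (RS x y :: R) ((x, Tri A) :: G) O)
              [mkSeq (RS x y :: R) ((x, Tri A) :: (y, A) :: G) O]
| r_trans_RR : forall R G O x y z,
    rule_inst (mkSeq (RR x y :: RR y z :: R) G O)
              [mkSeq (RR x y :: RR y z :: RR x z :: R) G O]
| r_trans_RS : forall R G O x y z,
    rule_inst (mkSeq (RR x y :: RS y z :: R) G O)
              [mkSeq (RR x y :: RS y z :: RS x z :: R) G O]
| r_trans_SR : forall R G O x y z,
    rule_inst (mkSeq (RS x y :: RR y z :: R) G O)
              [mkSeq (RS x y :: RR y z :: RR x z :: R) G O]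
| r_trans_SS : forall R G O x y z,
    rule_inst (mkSeq (RS x y :: RS y z :: R) G O)
              [mkSeq (RS x y :: RS y z :: RS x z :: R) G O].

Definition seq_perm (s t : sequent) : Prop :=
  Permutation (srel s) (srel t) /\
  Permutation (sant s) (sant t) /\
  Permutation (ssuc s) (ssuc t).

Definition rule_step (c : sequent) (ps : list sequent) : Prop :=
  exists c0 ps0, rule_inst c0 ps0 /\ seq_perm c c0 /\ Forall2 seq_perm ps ps0.

CoInductive ptree : Type :=
| Node : sequent -> list ptree -> ptree.

Definition root (t : ptree) : sequent := match t with Node s _ => s end.
Definition children (t : ptree) : list ptree := match t with Node _ ts => ts end.

Inductive subtree : ptree -> ptree -> Prop :=
| st_refl : forall t, subtree t t
| st_child : forall t u v, In u (children t) -> subtree u v -> subtree t v.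

Definition preproof (t : ptree) : Prop :=
  forall u, subtree t u -> rule_step (root u) (map root (children u)).

Definition inf_branch (t : ptree) (b : nat -> ptree) : Prop :=
  b 0 = t /\ forall i, In (b (S i)) (children (b i)).

Definition trace (b : nat -> ptree) (x : nat -> label) : Prop :=
  forall i, x (S i) = x i \/
            In (RR (x i) (x (S i))) (srel (root (b i))) \/
            In (RS (x i) (x (S i))) (srel (root (b i))).

Definition progressing_trace (b : nat -> ptree) (x : nat -> label) : Prop :=
  trace b x /\ ~ (exists N, forall n, N <= n -> x n = x N).

Definition progressing_branch (b : nat -> ptree) : Prop :=
  exists x, progressing_trace b x.

Definition is_proof (t : ptree) : Prop :=
  preproof t /\ forall b, inf_branch t b -> progressing_branch b.

Definition provable (s : sequent) : Prop :=
  exists t, is_proof t /\ root t = s.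

(* Interpretations are total maps label -> W; only labels of the sequent
   matter, and W is nonempty, so this is equivalent to maps on Lab(S). *)
Definition interpretation (M : carlson_model) (s : sequent) (I : label -> W M) : Prop :=
  forall r, In r (srel s) ->
    match r with
    | RR x y => prec M (I x) (I y) /\ M0 M (I y)
    | RS x y => prec M (I x) (I y) /\ M1 M (I y)
    end.

Definition valid_in (M : carlson_model) (s : sequent) : Prop :=
  forall I : label -> W M, interpretation M s I ->
    (forall x A, In (x, A) (sant s) -> forces M (I x) A) ->
    exists y B, In (y, B) (ssuc s) /\ forces M (I y) B.

(* Main.v *)
Require Import Defs.
From Stdlib Require Import List Permutation Arith Classical ClassicalEpsilon Lia.
Import ListNotations.

Definition fails M s (I : label -> W M) :=
  interpretation M s I /\ (forall x A, In (x,A) (sant s) -> forces M (I x) A) /\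
  (forall y B, In (y,B) (ssuc s) -> ~ forces M (I y) B).

Ltac occ_tac2 :=
  let z := fresh "z" in let H := fresh "H" in
  intros z H;
  unfold occurs in *; simpl in *;
  destruct H as [[?r [?Hr ?Hz]]|[[?A0 ?HA]|[?A0 ?HA]]];
  repeat match goal with
  | H : _ \/ _ |- _ => destruct H
  | H : (_,_) = (_,_) |- _ => injection H; clear H; intros; subst
  | H : False |- _ => destruct H
  end; subst; simpl in *;
  first [ match goal with Hr : In ?r _, Hz : In _ (ratom_labels ?r) |- _ =>
              left; exists r; split; simpl; tauto end
        | match goal with HA : In (_, ?A0) _ |- _ =>
              first [ right; left; exists A0; simpl; tauto
                    | right; right; exists A0; simpl; tauto ] end
        | right; left; eexists; left; reflexivity
        | right; right; eexists; left; reflexivity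
        | right; left; eexists; right; left; reflexivity
        | left; eexists; split; [left; reflexivity| simpl; tauto]
        | left; eexists; split; [right; left; reflexivity| simpl; tauto]
        | idtac ].
Ltac occ_tac := let z := fresh "z" in let H := fresh "H" in
  intros z H; split; [reflexivity|]; revert z H; occ_tac2.


Definition upd {T} (I : label -> T) y w := fun z => if Nat.eqb z y then w else I z.

Lemma upd_other {T} (I : label -> T) y w z : z <> y -> upd I y w z = I z.
Proof. unfold upd; intros H; destruct (Nat.eqb_spec z y); congruence. Qed.
Lemma upd_same {T} (I : label -> T) y w : upd I y w y = w.
Proof. unfold upd; rewrite Nat.eqb_refl; auto. Qed.

Ltac occ :=
  unfold occurs; simpl;
  first [ match goal with Hr : In ?r _ |- _ =>
              left; exists r; split; simpl; tauto end
        | match goal with HA : In (_, ?A0) _ |- _ =>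
              first [ right; left; exists A0; simpl; tauto
                    | right; right; exists A0; simpl; tauto ] end
        | left; eexists; split; [left; reflexivity| simpl; tauto]
        | left; eexists; split; [right; left; reflexivity| simpl; tauto]
        | right; left; eexists; left; reflexivity
        | right; right; eexists; left; reflexivity ].

Lemma fresh_neq y c z : ~ occurs y c -> occurs z c -> z <> y.
Proof. intros H1 H2 E; subst; auto. Qed.

Lemma rule_sound M c ps (I : label -> W M) : rule_inst c ps -> fails M c I ->
  exists p I', In p ps /\ fails M p I' /\ (forall z, occurs z c -> I' z = I z /\ occurs z p).
Proof.
  intros Hr [Hi [Ha Hs]]; destruct Hr; simpl in *.
  9-12: (eexists; exists I; split; [left; reflexivity|split; [|occ_tac]];
    split; [|split; simpl; auto];
    intros r Hr'; simpl in Hr';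
    pose proof (Hi _ (or_introl eq_refl)) as H1;
    pose proof (Hi _ (or_intror (or_introl eq_refl))) as H2; simpl in H1, H2;
    destruct Hr' as [E|[E|[E|E]]];
    [subst; auto|subst; auto| subst; destruct H1, H2; split; auto; eapply prec_trans; eauto
    | apply Hi; simpl; auto]).
  - exfalso. apply (Hs x (Var p)); auto.
  - exfalso. apply (Ha x Bot); auto.
  - exists (mkSeq R ((x, A) :: G) ((x, B) :: O)), I. split; [auto|split].
    + assert (HI := Hs x (Imp A B) (or_introl eq_refl)). simpl in HI.
      split; [exact Hi|split]; simpl.
      * intros y C [E|E]; [injection E; intros; subst|]; auto.
        apply NNPP; intro; apply HI; intros; contradiction.
      * intros y C [E|E]; [injection E; intros; subst|]; auto;
        try (intro; apply HI; intros; auto).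
    + occ_tac.
  - assert (HI := Ha x (Imp A B) (or_introl eq_refl)). simpl in HI.
    destruct (classic (forces M (I x) A)) as [HA|HA].
    + exists (mkSeq R ((x, B) :: G) O), I. split; [simpl; auto|split].
      * split; [exact Hi|split]; simpl; auto.
        intros y C [E|E]; [injection E; intros; subst|]; auto.
      * occ_tac.
    + exists (mkSeq R G ((x, A) :: O)), I. split; [simpl; auto|split].
      * split; [exact Hi|split]; simpl; auto.
        intros y C [E|E]; [injection E; intros; subst|]; auto.
      * occ_tac.
  - assert (HI := Hs x (Box A) (or_introl eq_refl)). simpl in HI.
    apply not_all_ex_not in HI as [w HI].
    destruct (imply_to_and _ _ HI) as [Hw1 HI2].
    destruct (imply_to_and _ _ HI2) as [Hw2 Hw3].
    assert (Ag : forall z, occurs z (mkSeq R G ((x, Box A) :: O)) -> upd I y w z = I z).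
    { intros z Hz. apply upd_other. eapply fresh_neq; eauto. }
    exists (mkSeq (RR x y :: R) G ((y, A) :: O)), (upd I y w). split; [simpl; auto|split].
    + split; [|split]; simpl.
      * intros r [E|E].
        -- subst. rewrite upd_same, Ag by occ. auto.
        -- specialize (Hi r E). destruct r as [a b|a b]; rewrite !Ag by (unfold occurs; left; eexists; split; [exact E| simpl; tauto]); auto.
      * intros z C E. rewrite Ag by occ. auto.
      * intros z C [E|E].
        -- injection E; intros; subst. rewrite upd_same. auto.
        -- rewrite Ag by occ. auto.
    + intros z Hz. split; [apply Ag; auto|]. revert z Hz. occ_tac2.
  - exists (mkSeq (RR x y :: R) ((x, Box A) :: (y, A) :: G) O), I. split; [simpl; auto|split].
    + split; [|split]; simpl; auto.
      intros z C [E|[E|E]]; try (injection E; intros; subst); auto.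
      destruct (Hi (RR x z) (or_introl eq_refl)). apply (Ha x (Box C)); auto.
    + occ_tac.
  - assert (HI := Hs x (Tri A) (or_introl eq_refl)). simpl in HI.
    apply not_all_ex_not in HI as [w HI].
    destruct (imply_to_and _ _ HI) as [Hw1 HI2].
    destruct (imply_to_and _ _ HI2) as [Hw2 Hw3].
    assert (Ag : forall z, occurs z (mkSeq R G ((x, Tri A) :: O)) -> upd I y w z = I z).
    { intros z Hz. apply upd_other. eapply fresh_neq; eauto. }
    exists (mkSeq (RS x y :: R) G ((y, A) :: O)), (upd I y w). split; [simpl; auto|split].
    + split; [|split]; simpl.
      * intros r [E|E].
        -- subst. rewrite upd_same, Ag by occ. auto.
        -- specialize (Hi r E). destruct r as [a b|a b]; rewrite !Ag by (unfold occurs; left; eexists; split; [exact E| simpl; tauto]); auto.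
      * intros z C E. rewrite Ag by occ. auto.
      * intros z C [E|E].
        -- injection E; intros; subst. rewrite upd_same. auto.
        -- rewrite Ag by occ. auto.
    + intros z Hz. split; [apply Ag; auto|]. revert z Hz. occ_tac2.
  - exists (mkSeq (RS x y :: R) ((x, Tri A) :: (y, A) :: G) O), I. split; [simpl; auto|split].
    + split; [|split]; simpl; auto.
      intros z C [E|[E|E]]; try (injection E; intros; subst); auto.
      destruct (Hi (RS x z) (or_introl eq_refl)). apply (Ha x (Tri C)); auto.
    + occ_tac.
Qed.

From Stdlib Require Import Lia.
Lemma seq_perm_sym s t : seq_perm s t -> seq_perm t s.
Proof. intros [a [b c]]; split; [|split]; apply Permutation_sym; auto. Qed.

Lemma perm_fails M s t (I : label -> W M) : seq_perm s t -> fails M s I -> fails M t I.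
Proof.
  intros [a [b c]] [Hi [Ha Hs]]; split; [|split].
  - intros r Hr; apply Hi; eapply Permutation_in; [apply Permutation_sym; eauto|auto].
  - intros x A H; apply Ha; eapply Permutation_in; [apply Permutation_sym; eauto|auto].
  - intros x A H; apply Hs; eapply Permutation_in; [apply Permutation_sym; eauto|auto].
Qed.

Lemma perm_occ s t z : seq_perm s t -> occurs z s -> occurs z t.
Proof.
  intros [a [b c]] [[r [H1 H2]]|[[A H]|[A H]]].
  - left; exists r; split; auto; eapply Permutation_in; eauto.
  - right; left; exists A; eapply Permutation_in; eauto.
  - right; right; exists A; eapply Permutation_in; eauto.
Qed.

Lemma Forall2_in_r {A B} (P : A -> B -> Prop) l1 l2 y :
  Forall2 P l1 l2 -> In y l2 -> exists x, In x l1 /\ P x y.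
Proof.
  induction 1; simpl; [tauto|].
  intros [E|E]; [subst; eauto|]. destruct (IHForall2 E) as [z [? ?]]; eauto.
Qed.

Lemma subtree_child t u v : subtree t u -> In v (children u) -> subtree t v.
Proof.
  induction 1; intros Hv.
  - eapply st_child; eauto. apply st_refl.
  - eapply st_child; eauto.
Qed.

Section Main.
Variable M : carlson_model.
Variable t0 : ptree.
Hypothesis Hpf : is_proof t0.

Definition Good (st : ptree * (label -> W M)) :=
  subtree t0 (fst st) /\ fails M (root (fst st)) (snd st).

Lemma step st : Good st -> exists st', Good st' /\ In (fst st') (children (fst st)) /\
   (forall z, occurs z (root (fst st)) -> snd st' z = snd st z /\ occurs z (root (fst st'))).
Proof.
  destruct st as [u I]; intros [Hsub Hf]; simpl in *.
  destruct (proj1 Hpf u Hsub) as [c0 [ps0 [Hr [Hp H2]]]].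
  destruct (rule_sound M c0 ps0 I Hr (perm_fails _ _ _ _ Hp Hf)) as [p [I' [Hin [Hf' Hag]]]].
  destruct (Forall2_in_r _ _ _ _ H2 Hin) as [q [Hq Hqp]].
  apply in_map_iff in Hq as [v [Ev Hv]]; subst q.
  exists (v, I'); simpl; split; [split; simpl|split; auto].
  - eapply subtree_child; eauto.
  - eapply perm_fails; [apply seq_perm_sym; eauto|auto].
  - intros z Hz. destruct (Hag z (perm_occ _ _ _ Hp Hz)) as [A B]. split; auto.
    eapply perm_occ; [apply seq_perm_sym; eauto|auto].
Qed.

Definition GS := { st | Good st }.

Definition nxt (g : GS) : GS :=
  let e := constructive_indefinite_description _ (step (proj1_sig g) (proj2_sig g)) in
  exist _ (proj1_sig e) (proj1 (proj2_sig e)).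

Lemma nxt_spec g : In (fst (proj1_sig (nxt g))) (children (fst (proj1_sig g))) /\
   (forall z, occurs z (root (fst (proj1_sig g))) ->
     snd (proj1_sig (nxt g)) z = snd (proj1_sig g) z /\ occurs z (root (fst (proj1_sig (nxt g))))).
Proof.
  unfold nxt. destruct (constructive_indefinite_description _ _) as [st' [? [? ?]]]; simpl; auto.
Qed.

Variable g0 : GS.
Hypothesis Hg0 : fst (proj1_sig g0) = t0.

Fixpoint gs (n : nat) : GS := match n with 0 => g0 | S n => nxt (gs n) end.
Definition b n := fst (proj1_sig (gs n)).
Definition J n := snd (proj1_sig (gs n)).

Lemma b_branch : inf_branch t0 b.
Proof. split; [exact Hg0|]. intros i; unfold b; simpl; apply nxt_spec. Qed.

Lemma J_interp n : interpretation M (root (b n)) (J n).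
Proof. unfold b, J; destruct (gs n) as [st [? [? ?]]]; simpl; auto. Qed.

Lemma J_agree n z : occurs z (root (b n)) -> J (S n) z = J n z /\ occurs z (root (b (S n))).
Proof. unfold b, J; simpl; apply nxt_spec. Qed.

Lemma contradiction_ : False.
Proof.
  destruct (proj2 Hpf b b_branch) as [x [Htr Hnc]].
  set (g := fun i => J i (x i)).
  assert (Hstep : forall i, occurs (x i) (root (b i)) ->
     occurs (x (S i)) (root (b (S i))) /\
     (g (S i) = g i \/ prec M (g i) (g (S i))) /\
     (x (S i) <> x i -> prec M (g i) (g (S i)))).
  { intros i Hoc. unfold g. destruct (Htr i) as [E|[E|E]].
    - rewrite E. destruct (J_agree i (x i) Hoc) as [A B]. rewrite A. split; auto.
      split; auto. intros C; congruence.
    - assert (Ho : occurs (x (S i)) (root (b i))) by (left; exists (RR (x i) (x (S i))); simpl; auto).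
      destruct (J_agree i _ Ho) as [A B]. rewrite A. pose proof (J_interp i _ E) as [P _].
      auto.
    - assert (Ho : occurs (x (S i)) (root (b i))) by (left; exists (RS (x i) (x (S i))); simpl; auto).
      destruct (J_agree i _ Ho) as [A B]. rewrite A. pose proof (J_interp i _ E) as [P _].
      auto. }
  assert (Hocc0 : exists N, occurs (x N) (root (b N))).
  { destruct (classic (exists i, x (S i) <> x i)) as [[i Hi]|Hn].
    - exists i. destruct (Htr i) as [E|[E|E]].
      + congruence.
      + left; exists (RR (x i) (x (S i))); simpl; auto.
      + left; exists (RS (x i) (x (S i))); simpl; auto.
    - exfalso. apply Hnc. exists 0. intros n _. induction n; auto.
      rewrite <- IHn. apply NNPP; intro; apply Hn; eauto. }
  destruct Hocc0 as [N HN].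
  assert (Hocc : forall k, occurs (x (N + k)) (root (b (N + k)))).
  { induction k; [rewrite Nat.add_0_r; auto|]. rewrite Nat.add_succ_r. apply Hstep; auto. }
  assert (Hfar : forall i, N <= i -> forall k,
     (g (i + k) = g i \/ prec M (g i) (g (i + k))) /\ (x (i + k) <> x i -> prec M (g i) (g (i + k)))).
  { intros i Hi k. assert (Oi : forall k, occurs (x (i + k)) (root (b (i + k)))).
    { intros k'. replace (i + k') with (N + (i - N + k')) by lia. apply Hocc. }
    induction k.
    - rewrite Nat.add_0_r. split; auto. intros C; congruence.
    - rewrite Nat.add_succ_r. destruct (Hstep (i + k) (Oi k)) as [_ [S1 S2]].
      destruct IHk as [I1 I2]. split.
      + destruct I1 as [I1|I1]; [rewrite <- I1; auto|]. right.
        destruct S1 as [S1|S1]; [rewrite S1; auto|]. eapply prec_trans; eauto.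
      + intros Hne. destruct (Nat.eq_dec (x (i + k)) (x i)) as [Eq|Ne].
        * assert (P := S2 ltac:(congruence)). destruct I1 as [I1|I1]; [rewrite <- I1; auto|].
          eapply prec_trans; eauto.
        * assert (P := I2 Ne). destruct S1 as [S1|S1]; [rewrite S1; auto|]. eapply prec_trans; eauto. }
  assert (Hex : forall i, exists j, N <= i -> N <= j /\ prec M (g i) (g j)).
  { intros i. destruct (le_lt_dec N i) as [Hi|Hi]; [|exists 0; intros; lia].
    assert (exists n, i <= n /\ x n <> x i) as [n [Hn1 Hn2]].
    { apply NNPP; intro C. apply Hnc. exists i. intros n Hn. apply NNPP; intro D; apply C; eauto. }
    exists n. intros _. split; [lia|]. replace n with (i + (n - i)) by lia.
    apply Hfar; auto. replace (i + (n - i)) with n by lia. auto. }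
  set (h := fun i => proj1_sig (constructive_indefinite_description _ (Hex i))).
  assert (Hh : forall i, N <= i -> N <= h i /\ prec M (g i) (g (h i))).
  { intros i. unfold h. destruct (constructive_indefinite_description _ _); simpl; auto. }
  set (f := fun n => Nat.iter n h N).
  assert (Hf : forall n, N <= f n).
  { induction n; simpl; auto. apply Hh; auto. }
  apply (prec_cwf M). exists (fun n => g (f n)). intros n. simpl. apply Hh; auto.
Qed.
End Main.

Theorem theorem2 : forall s : sequent, provable s -> forall M : carlson_model, valid_in M s.
Proof.
  intros s [t [Hpf Hr]] M. apply NNPP; intro Hv. unfold valid_in in Hv.
  apply not_all_ex_not in Hv as [I Hv].
  destruct (imply_to_and _ _ Hv) as [Hi Hv2]. destruct (imply_to_and _ _ Hv2) as [Ha Hs].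
  assert (G0 : Good M t (t, I)).
  { split; simpl; [apply st_refl|]. rewrite Hr. split; [|split]; auto.
    intros y B H F. apply Hs; eauto. }
  exact (contradiction_ M t Hpf (exist _ (t, I) G0) eq_refl).
Qed.
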